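(* Let $n\ge 3$ and $3\le d_1\le d_2\le\cdots\le d_n$. In $\mathbb{C}^{d_1}\otimes\cdots\otimes\mathbb{C}^{d_n}$ consider the following product states, where in each state every party not explicitly listed is in the state $|0\rangle$: ($\mathcal{B}_1$) $|0-i\rangle_1|i\rangle_n$ for $1\le i\le d_1-1$; ($\mathcal{B}_{k+1}$, $k=1,\dots,n-1$) $|i\rangle_k|0-i\rangle_{k+1}$ for $1\le i\le d_k-1$; ($\mathcal{B}_{n+k}$, $k=1,\dots,n-2$) $|1\rangle_k|0-i\rangle_{k+1}|i\rangle_{k+2}$ for $d_k\le i\le d_{k+1}-1$; ($\mathcal{B}_{2n-1}$) $|m_i\rangle_1|1\rangle_{n-1}|(i-1)-i\rangle_n$ for $d_{n-1}\le i\le d_n-1$, where $m_i=2$ if $i$ is even and $m_i=1$ if $i$ is odd; ($\mathcal{B}_{2n}$) $|0-2\rangle_1|0-2\rangle_{n-1}|i\rangle_n$ for $d_1\le i\le d_n-1$; ($\mathcal{B}_{2n+1}$) the stopper state $\bigotimes_{l=1}^n|0+1+\cdots+(d_l-1)\rangle_l$. This set has $\sum_{i=2}^{n-1}d_i+2d_n-n+1$ elements, its states are pairwise orthogonal, and for every party $t\in\{1,\dots,n\}$, every orthogonality-preserving local POVM element $E_t$ on party $t$ for this set is proportional to the identity. Consequently, this set cannot be perfectly distinguished by LOCC.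
   Context: $\{|i\rangle\}$ is the computational basis; $|i_1\pm i_2\pm\cdots\pm i_r\rangle$ denotes $\frac{1}{\sqrt r}(|i_1\rangle\pm|i_2\rangle\pm\cdots\pm|i_r\rangle)$; subscripts indicate the party; ranges $a\le i\le b$ with $a>b$ are empty. For a set $\{|\psi_a\rangle\}$ of pairwise orthogonal states in $\mathbb{C}^{d_1}\otimes\cdots\otimes\mathbb{C}^{d_n}$, a positive semidefinite operator $E_t$ on $\mathbb{C}^{d_t}$ (a POVM element $M_t^\dagger M_t$ of a measurement by party $t$) is called orthogonality-preserving if $\langle\psi_a|(\mathbb{I}\otimes\cdots\otimes E_t\otimes\cdots\otimes\mathbb{I})|\psi_b\rangle=0$ for all $a\neq b$; the measurement is trivial if all its POVM elements are proportional to the identity. A set of orthogonal states for which every party can only perform trivial orthogonality-preserving measurements cannot be perfectly distinguished by LOCC. *)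

(* Defs.v *)
From HB Require Import structures.
From mathcomp Require Import all_boot all_order all_algebra.
Set Implicit Arguments. Unset Strict Implicit. Unset Printing Implicit Defensive.
Import Order.TTheory GRing.Theory Num.Theory.
Local Open Scope ring_scope.

(* Conventions: parties are numbered 0..n-1 (paper party k is our party k-1);
   the local dimension of party l is d l. *)

Section Defs.
Variable C : numClosedFieldType.

Definition adj m n (A : 'M[C]_(m, n)) : 'M[C]_(n, m) := (map_mx Num.conj A)^T.

Definition ket (m i : nat) : 'cV[C]_m := \col_(j < m) (((j : nat) == i)%:R).

(* normalized signed superposition: s lists (coefficient, basis index),
   coefficients are +1/-1; result is (1/sqrt r) sum_p coef_p |i_p>. *)
Definition lc (m : nat) (s : seq (C * nat)) : 'cV[C]_m :=
  (sqrtC ((size s)%:R : C))^-1 *: \sum_(p <- s) p.1 *: ket m p.2.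

(* A product state is specified by giving, for each party l, its local
   superposition (spec l).  [st a] lists the explicitly given parties;
   every other party is in |0>. *)
Definition spec := nat -> seq (C * nat).

Definition st (a : seq (nat * seq (C * nat))) : spec :=
  fun l => if [seq p.2 | p <- a & p.1 == l] is v :: _ then v else [:: (1, 0%N)].

Definition local_state (d : nat -> nat) (f : spec) (l : nat) : 'cV[C]_(d l) :=
  lc (d l) (f l).

(* < psi_f | (I (x) ... (x) E_t (x) ... (x) I) | psi_g > for product states
   psi_f = (x)_l psi_f,l and psi_g = (x)_l psi_g,l on n parties. *)
Definition sandwich (n : nat) (d : nat -> nat) (f g : spec) (t : nat)
  (E : 'M[C]_(d t)) : C :=
  (\prod_(l < n | (l : nat) != t)
      (adj (local_state d f l) *m local_state d g l) 0 0)
  * (adj (local_state d f t) *m E *m local_state d g t) 0 0.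

Definition inner (n : nat) (d : nat -> nat) (f g : spec) : C :=
  \prod_(l < n) (adj (local_state d f l) *m local_state d g l) 0 0.

Definition psd m (E : 'M[C]_m) : Prop :=
  adj E = E /\ forall v : 'cV[C]_m, 0 <= (adj v *m E *m v) 0 0.

Definition orth_preserving (n : nat) (d : nat -> nat) (S : seq spec) (t : nat)
  (E : 'M[C]_(d t)) : Prop :=
  forall a b : nat, (a < size S)%N -> (b < size S)%N -> a <> b ->
    @sandwich n d (nth (fun _ => [::]) S a) (nth (fun _ => [::]) S b) t E = 0.

Definition states_pairwise_orthogonal (n : nat) (d : nat -> nat) (S : seq spec) : Prop :=
  forall a b : nat, (a < size S)%N -> (b < size S)%N -> a <> b ->
    inner n d (nth (fun _ => [::]) S a) (nth (fun _ => [::]) S b) = 0.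

Definition trivial_op m (E : 'M[C]_m) : Prop := exists c : C, E = c%:M.

Definition minus0 (i : nat) : seq (C * nat) := [:: (1, 0%N); (-1, i)].
Definition basis1 (i : nat) : seq (C * nat) := [:: (1, i)].

Definition theset (n : nat) (d : nat -> nat) : seq spec :=
  (* B_1 : |0-i>_1 |i>_n, 1 <= i <= d_1 - 1 *)
  [seq st [:: (0%N, minus0 i); (n.-1, basis1 i)] | i <- iota 1 (d 0%N).-1]
  (* B_{k+1}, k = 1..n-1 : |i>_k |0-i>_{k+1}, 1 <= i <= d_k - 1 *)
  ++ flatten [seq [seq st [:: (k, basis1 i); (k.+1, minus0 i)]
                   | i <- iota 1 (d k).-1] | k <- iota 0 n.-1]
  (* B_{n+k}, k = 1..n-2 : |1>_k |0-i>_{k+1} |i>_{k+2}, d_k <= i <= d_{k+1}-1 *)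
  ++ flatten [seq [seq st [:: (k, basis1 1); (k.+1, minus0 i); (k.+2, basis1 i)]
                   | i <- iota (d k) (d k.+1 - d k)] | k <- iota 0 n.-2]
  (* B_{2n-1} : |m_i>_1 |1>_{n-1} |(i-1)-i>_n, d_{n-1} <= i <= d_n - 1 *)
  ++ [seq st [:: (0%N, basis1 (if odd i then 1%N else 2%N)); (n.-2, basis1 1);
                 (n.-1, [:: (1, i.-1); (-1, i)])]
      | i <- iota (d n.-2) (d n.-1 - d n.-2)]
  (* B_{2n} : |0-2>_1 |0-2>_{n-1} |i>_n, d_1 <= i <= d_n - 1 *)
  ++ [seq st [:: (0%N, minus0 2); (n.-2, minus0 2); (n.-1, basis1 i)]
      | i <- iota (d 0%N) (d n.-1 - d 0%N)]
  (* B_{2n+1} : stopper state (x)_l |0+1+...+(d_l - 1)> *)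
  ++ [:: fun l => [seq (1, j) | j <- iota 0 (d l)]].

End Defs.

(* Main.v *)
Require Import Defs.
From mathcomp Require Import all_boot all_order all_algebra.
From mathcomp Require Import zify ring lra.
Import Order.TTheory GRing.Theory Num.Theory.
Local Open Scope ring_scope.
Set Implicit Arguments. Unset Strict Implicit. Unset Printing Implicit Defensive.

Section Infra.
Variable C : numClosedFieldType.

Definition e m (M : 'M[C]_m) i j := (adj (ket C m i) *m M *m ket C m j) 0 0.
Definition eE m (M : 'M[C]_m) (s s' : seq (C * nat)) :=
  \sum_(p <- s) \sum_(q <- s') (Num.conj p.1 * q.1 * e M p.2 q.2).
Definition ov m (s s' : seq (C * nat)) := eE (1%:M : 'M[C]_m) s s'.
Definition nrm (s : seq (C * nat)) : C := (sqrtC ((size s)%:R : C))^-1.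
Definition vsum m (s : seq (C * nat)) : 'cV[C]_m := \sum_(p <- s) p.1 *: ket C m p.2.

Lemma adjD m k (A B : 'M[C]_(m, k)) : adj (A + B) = adj A + adj B.
Proof. by apply/matrixP => i j; rewrite !mxE rmorphD. Qed.
Lemma adjZ m k a (A : 'M[C]_(m, k)) : adj (a *: A) = Num.conj a *: adj A.
Proof. by apply/matrixP => i j; rewrite !mxE rmorphM. Qed.
Lemma adj0 m k : adj (0 : 'M[C]_(m, k)) = 0.
Proof. by apply/matrixP => i j; rewrite !mxE rmorph0. Qed.

Lemma vsumE m (M : 'M[C]_m) s s' :
  (adj (vsum m s) *m M *m vsum m s') 0 0 = eE M s s'.
Proof.
rewrite /eE /vsum; elim: s => [|p s IH].
  by rewrite !big_nil adj0 !mul0mx mxE.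
rewrite !big_cons adjD adjZ !mulmxDl mxE IH; congr (_ + _).
rewrite -!scalemxAl mxE.
clear IH; elim: s' => [|q s' IH'].
  by rewrite !big_nil mulmx0 mxE mulr0.
rewrite !big_cons mulmxDr mxE mulrDr IH' -scalemxAr mxE; congr (_ + _).
by rewrite /e; ring.
Qed.

Lemma lcE m (M : 'M[C]_m) s s' :
  (adj (lc m s) *m M *m lc m s') 0 0 = Num.conj (nrm s) * nrm s' * eE M s s'.
Proof.
rewrite /lc -/(vsum m s) -/(vsum m s') adjZ -!scalemxAl -scalemxAr.
rewrite [LHS]mxE [X in _ * X]mxE vsumE /nrm.
ring.
Qed.

Lemma nrm_neq0 s : s != [::] -> nrm s != 0.
Proof.
case: s => // p s _; rewrite /nrm invr_eq0 sqrtC_eq0 pnatr_eq0 //.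
Qed.

Lemma eE_nil m (M : 'M[C]_m) s : eE M [::] s = 0.
Proof. by rewrite /eE big_nil. Qed.
Lemma eE_nilr m (M : 'M[C]_m) s : eE M s [::] = 0.
Proof. by rewrite /eE big1 // => p _; rewrite big_nil. Qed.

Lemma sum_ind m i (c : C) : \sum_(k < m) ((k : nat) == i)%:R * c = (i < m)%:R * c.
Proof.
case: (ltnP i m) => H.
  rewrite (bigD1 (Ordinal H)) //= eqxx mul1r big1 ?addr0 ?mul1r // => k.
  by rewrite -val_eqE /= => /negPf ->; rewrite mul0r.
rewrite big1 ?mul0r // => k _; have : (k : nat) != i by apply/eqP => E; move: (ltn_ord k); rewrite E; lia.
by move/negPf ->; rewrite mul0r.
Qed.

Lemma eEntry m (M : 'M[C]_m) (i j : 'I_m) : e M i j = M i j.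
Proof.
rewrite /e mxE.
transitivity (\sum_(k < m) ((k : nat) == j)%:R * M i k).
  apply: eq_bigr => k _; rewrite !mxE mulrC; congr (_ * _).
  transitivity (\sum_(l < m) ((l : nat) == i)%:R * M l k).
    by apply: eq_bigr => l _; rewrite !mxE conjC_nat.
  rewrite (bigD1 i) //= eqxx mul1r big1 ?addr0 // => l /negPf.
  by rewrite -val_eqE /= => ->; rewrite mul0r.
rewrite (bigD1 j) //= eqxx mul1r big1 ?addr0 // => l /negPf.
by rewrite -val_eqE /= => ->; rewrite mul0r.
Qed.

Lemma e1 m i j : e (1%:M : 'M[C]_m) i j = ((i == j) && (i < m)%N)%:R.
Proof.
rewrite /e mulmx1 mxE.
transitivity (\sum_(k < m) ((k : nat) == i)%:R * ((i == j)%:R : C)).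
  apply: eq_bigr => k _; rewrite !mxE conjC_nat.
  case: eqP => [E|_]; last by rewrite !mul0r.
  by rewrite -E.
rewrite sum_ind; case: (i == j); case: (i < m)%N => /=; rewrite ?mulr1 ?mulr0 //.
Qed.

End Infra.

Section Infra2.
Variable C : numClosedFieldType.
Local Notation ov := (@ov C).
Local Notation e := (@e C).
Local Notation eE := (@eE C).

Definition U m : seq (C * nat) := [seq (1, j) | j <- iota 0 m].

Lemma e_out m (M : 'M[C]_m) i j : (m <= i)%N || (m <= j)%N -> e M i j = 0.
Proof.
have K : forall k, (m <= k)%N -> ket C m k = 0.
  move=> k Hk; apply/matrixP => a b; rewrite !mxE.
  case: eqP => // E; move: (ltn_ord a); lia.
case/orP => H; rewrite /e.
  by rewrite (K i) // adj0 !mul0mx mxE.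
by rewrite (K j) // mulmx0 mxE.
Qed.

Lemma sum_iota1 (F : nat -> C) i m :
  (forall j, (j < m)%N -> j != i -> F j = 0) ->
  \sum_(j <- iota 0 m) F j = ((i < m)%N)%:R * F i.
Proof.
move=> H; case: (ltnP i m) => Him.
  rewrite (bigD1_seq i) ?iota_uniq ?mem_iota //= big1_seq ?addr0 ?mul1r //.
  move=> j /andP [ne]; rewrite mem_iota => /andP [_ lt]; apply: H => //; lia.
rewrite mul0r big1_seq // => j [] ; rewrite mem_iota => /andP [_ lt].
apply: H => //; apply/eqP => E; lia.
Qed.

Lemma ov_conj m s s' : ov m s' s = Num.conj (ov m s s').
Proof.
rewrite /ov /eE rmorph_sum /= exchange_big /=; apply: eq_bigr => q _.
rewrite rmorph_sum; apply: eq_bigr => p _.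
rewrite !rmorphM /= conjCK !e1 conjC_nat.
have -> : ((q.2 == p.2) && (q.2 < m)%N) = ((p.2 == q.2) && (p.2 < m)%N).
  by case: (eqVneq q.2 p.2) => [->|ne]; rewrite ?eqxx // eq_sym (negPf ne).
ring.
Qed.

Lemma ov_sym0 m s s' : ov m s s' = 0 -> ov m s' s = 0.
Proof. by move=> H; rewrite (ov_conj m s s') H rmorph0. Qed.
Lemma ov_symN0 m s s' : ov m s s' != 0 -> ov m s' s != 0.
Proof. by rewrite (ov_conj m s s') conjC_eq0. Qed.

Lemma ov_disj m s s' : all (fun p => all (fun q => p.2 != q.2) s') s -> ov m s s' = 0.
Proof.
move/allP => H; rewrite /ov /eE big1_seq // => p [] /H /allP H'.
rewrite big1_seq // => q [] /H' ne; rewrite e1 (negPf ne) /= mulr0 //.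
Qed.

Lemma eE_U m (M : 'M[C]_m) s :
  (forall i j, (i < m)%N -> (j < m)%N -> i != j -> e M i j = 0) ->
  eE M s (U m) = \sum_(p <- s) Num.conj p.1 * e M p.2 p.2.
Proof.
move=> H; rewrite /eE; apply: eq_bigr => p _.
rewrite /U big_map (eq_bigr (fun j => Num.conj p.1 * e M p.2 j)); last by move=> j _; rewrite mulr1.
rewrite -mulr_sumr (sum_iota1 (i := p.2)); last first.
  move=> j lt ne; case: (ltnP p.2 m) => h; first by apply: H; rewrite // eq_sym.
  by apply: e_out; rewrite h.
case: (ltnP p.2 m) => h; first by rewrite mul1r.
by rewrite mul0r e_out ?h // mulr0.
Qed.

Lemma ov_U m s : ov m s (U m) = \sum_(p <- s) Num.conj p.1 * ((p.2 < m)%N)%:R.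
Proof.
rewrite /ov eE_U; last by move=> i j _ _ ne; rewrite e1 (negPf ne).
by apply: eq_bigr => p _; rewrite e1 eqxx.
Qed.

Ltac fin := rewrite /= ?conjC1 ?conjCN1 ?mulr0 ?mul0r ?mulr1 ?mul1r ?addr0 ?add0r ?mulN1r ?mulrN1 ?opprK ?oppr_eq0 ?oner_eq0 ?subrr //.

Lemma ov_bb m i : (i < m)%N -> ov m (basis1 C i) (basis1 C i) != 0.
Proof. move=> h; rewrite /ov /eE !big_cons !big_nil /= e1 eqxx h; fin. Qed.

Lemma ov_0m m i : (0 < i)%N -> (0 < m)%N -> ov m (basis1 C 0) (minus0 C i) != 0.
Proof.
move=> h h'; rewrite /ov /eE !big_cons !big_nil /= !e1 eqxx h'.
have -> : (0 == i) = false by lia.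
fin.
Qed.
Lemma ov_m0 m i : (0 < i)%N -> (0 < m)%N -> ov m (minus0 C i) (basis1 C 0) != 0.
Proof. by move=> h h'; apply: ov_symN0; apply: ov_0m. Qed.

Lemma ov_im m i : (0 < i < m)%N -> ov m (basis1 C i) (minus0 C i) != 0.
Proof.
move=> h; rewrite /ov /eE !big_cons !big_nil /= !e1 eqxx.
have -> : (i == 0) = false by lia.
have -> : (i < m)%N = true by lia.
fin.
Qed.
Lemma ov_mi m i : (0 < i < m)%N -> ov m (minus0 C i) (basis1 C i) != 0.
Proof. by move=> h; apply: ov_symN0; apply: ov_im. Qed.

Lemma ov_mm m i j : (0 < i < m)%N -> (0 < j < m)%N -> ov m (minus0 C i) (minus0 C j) != 0.
Proof.
move=> hi hj; rewrite /ov /eE !big_cons !big_nil /= !e1 eqxx.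
have -> : (0 == j) = false by lia.
have -> : (i == 0) = false by lia.
have -> : (0 < m)%N = true by lia.
have -> : (i < m)%N = true by lia.
fin.
case: (i == j) => /=; fin.
by rewrite -mulr2n pnatr_eq0.
Qed.

Lemma ov_bU m i : (i < m)%N -> ov m (basis1 C i) (U m) != 0.
Proof. by move=> h; rewrite ov_U big_cons big_nil /= h; fin. Qed.

Lemma ov_mU m i : (0 < i < m)%N -> ov m (minus0 C i) (U m) = 0.
Proof.
move=> h; rewrite ov_U !big_cons big_nil /=.
have -> : (0 < m)%N = true by lia.
have -> : (i < m)%N = true by lia.
fin.
Qed.
Lemma ov_dU m i : (0 < i < m)%N -> ov m [:: (1, i.-1); (-1, i)] (U m) = 0.
Proof.
move=> h; rewrite ov_U !big_cons big_nil /=.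
have -> : (i.-1 < m)%N = true by lia.
have -> : (i < m)%N = true by lia.
fin.
Qed.

Lemma eE_bb m (M : 'M[C]_m) i j : eE M (basis1 C i) (basis1 C j) = e M i j.
Proof. by rewrite /eE !big_cons !big_nil /= conjC1 !mul1r !addr0. Qed.
Lemma eE_bm m (M : 'M[C]_m) i j : eE M (basis1 C i) (minus0 C j) = e M i 0 - e M i j.
Proof. by rewrite /eE !big_cons !big_nil /= conjC1 !mul1r !addr0 mulN1r. Qed.
Lemma eE_mb m (M : 'M[C]_m) i j : eE M (minus0 C i) (basis1 C j) = e M 0 j - e M i j.
Proof. by rewrite /eE !big_cons !big_nil /= conjC1 conjCN1 !mul1r !addr0 !mulr1 mulN1r. Qed.

Lemma eE_mU m (M : 'M[C]_m) i :
  (forall i j, (i < m)%N -> (j < m)%N -> i != j -> e M i j = 0) ->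
  eE M (minus0 C i) (U m) = e M 0 0 - e M i i.
Proof. by move=> H; rewrite eE_U // !big_cons big_nil /= conjC1 conjCN1 mul1r mulN1r addr0. Qed.
Lemma eE_dU m (M : 'M[C]_m) i :
  (forall i j, (i < m)%N -> (j < m)%N -> i != j -> e M i j = 0) ->
  eE M [:: (1, i.-1); (-1, i)] (U m) = e M i.-1 i.-1 - e M i i.
Proof. by move=> H; rewrite eE_U // !big_cons big_nil /= conjC1 conjCN1 mul1r mulN1r addr0. Qed.

End Infra2.

Section Infra3.
Variable C : numClosedFieldType.
Local Notation ov := (@ov C).
Local Notation eE := (@eE C).

Lemma factorE m (s s' : seq (C * nat)) :
  (adj (lc m s) *m lc m s') 0 0 = Num.conj (nrm s) * nrm s' * ov m s s'.
Proof. by rewrite -lcE mulmx1. Qed.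

Lemma inner0 n d (f g : spec C) :
  (exists l, (l < n)%N /\ ov (d l) (f l) (g l) = 0) -> inner n d f g = 0.
Proof.
case=> l [ln H]; rewrite /inner (bigD1 (Ordinal ln)) //= /local_state factorE H.
by rewrite mulr0 mul0r.
Qed.

Lemma ov_nil_neq m s s' : ov m s s' != 0 -> (s != [::]) && (s' != [::]).
Proof.
case: s => [|p s]; first by rewrite /ov eE_nil eqxx.
case: s' => [|q s'] //; by rewrite /ov eE_nilr eqxx.
Qed.

Lemma sand0 n d (f g : spec C) t (E : 'M[C]_(d t)) :
  sandwich n f g E = 0 ->
  (forall l, (l < n)%N -> l != t -> ov (d l) (f l) (g l) != 0) ->
  eE E (f t) (g t) = 0.
Proof.
move=> H NZ; move: H; rewrite /sandwich /local_state lcE.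
have P : \prod_(l < n | (l : nat) != t) (adj (lc (d l) (f l)) *m lc (d l) (g l)) 0 0 != 0.
  apply/prodf_neq0 => l lt; rewrite factorE.
  have := NZ l (ltn_ord l) lt => h; move: (ov_nil_neq h) => /andP [h1 h2].
  by rewrite !mulf_neq0 // ?conjC_eq0 nrm_neq0.
move/eqP; rewrite mulf_eq0 (negPf P) /=.
case: (f t) => [|p s]; first by rewrite eE_nil.
case: (g t) => [|q s']; first by rewrite eE_nilr.
by rewrite !mulf_eq0 conjC_eq0 !(negPf (nrm_neq0 _)) //= => /eqP.
Qed.

Definition lab := (nat * nat * nat)%type.

Definition sem n d (L : lab) : spec C :=
  let: (b, k, i) := L in
  match b with
  | 0 => st [:: (0%N, minus0 C i); (n.-1, basis1 C i)]
  | 1 => st [:: (k, basis1 C i); (k.+1, minus0 C i)]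
  | 2 => st [:: (k, basis1 C 1); (k.+1, minus0 C i); (k.+2, basis1 C i)]
  | 3 => st [:: (0%N, basis1 C (if odd i then 1%N else 2%N)); (n.-2, basis1 C 1);
                 (n.-1, [:: (1, i.-1); (-1, i)])]
  | 4 => st [:: (0%N, minus0 C 2); (n.-2, minus0 C 2); (n.-1, basis1 C i)]
  | _ => fun l => [seq (1, j) | j <- iota 0 (d l)]
  end.

Definition labs n (d : nat -> nat) : seq lab :=
  [seq (0, 0, i) | i <- iota 1 (d 0%N).-1]
  ++ flatten [seq [seq (1, k, i) | i <- iota 1 (d k).-1] | k <- iota 0 n.-1]
  ++ flatten [seq [seq (2, k, i) | i <- iota (d k) (d k.+1 - d k)] | k <- iota 0 n.-2]
  ++ [seq (3, 0, i) | i <- iota (d n.-2) (d n.-1 - d n.-2)]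
  ++ [seq (4, 0, i) | i <- iota (d 0%N) (d n.-1 - d 0%N)]
  ++ [:: (5, 0, 0)]%N.

Lemma theset_map n d : theset C n d = map (sem n d) (labs n d).
Proof.
rewrite /theset /labs !map_cat !map_flatten -!map_comp.
congr (_ ++ (flatten _ ++ (flatten _ ++ _))).
- by apply: eq_map => k /=; rewrite -map_comp.
- by apply: eq_map => k /=; rewrite -map_comp.
Qed.

End Infra3.

Section Infra4.

Definition valid n (d : nat -> nat) (L : lab) : bool :=
  let: (b, k, i) := L in
  match b with
  | 0 => (k == 0) && (1 <= i < d 0%N)
  | 1 => (k < n.-1) && (1 <= i < d k)
  | 2 => (k < n.-2) && (d k <= i < d k.+1)
  | 3 => (k == 0) && (d n.-2 <= i < d n.-1)
  | 4 => (k == 0) && (d 0%N <= i < d n.-1)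
  | 5 => (k == 0) && (i == 0)
  | _ => false
  end%N.

Lemma mem_flat (b : nat) (s : nat -> seq nat) (r : seq nat) (x : lab) :
  (x \in flatten [seq [seq (b, k, i) | i <- s k] | k <- r]) =
  [&& x.1.1 == b, x.1.2 \in r & x.2 \in s x.1.2].
Proof.
apply/flattenP/idP.
  by case=> ss /mapP [k kr ->] /mapP [i iS ->] /=; rewrite eqxx kr iS.
case: x => [[b' k] i] /= /and3P [/eqP -> kr iS].
exists [seq (b, k, i) | i <- s k]; first by apply/mapP; exists k.
by apply/mapP; exists i.
Qed.

Lemma mem_mapb (b k : nat) (s : seq nat) (x : lab) :
  (x \in [seq (b, k, i) | i <- s]) = [&& x.1.1 == b, x.1.2 == k & x.2 \in s].
Proof.
apply/mapP/idP.
  by case=> i iS ->; rewrite /= !eqxx iS.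
by case: x => [[b' k'] i] /= /and3P [/eqP -> /eqP -> iS]; exists i.
Qed.

Lemma mem_labs n d (x : lab) : (x \in labs n d) = valid n d x.
Proof.
case: x => [[b k] i].
rewrite /labs !mem_cat !mem_flat !mem_mapb !mem_iota inE /=.
case: b => [|[|[|[|[|[|b]]]]]] /=; rewrite ?andbF ?orbF //=.
all: rewrite ?xpair_eqE.
all: try lia.
all: try (case: (d 0%N) => [|x] /=; lia).
all: try (case: (d k) => [|x] /=; lia).
Qed.

Lemma uniq_flat (b : nat) (s : nat -> seq nat) (r : seq nat) :
  uniq r -> (forall k, uniq (s k)) ->
  uniq (flatten [seq [seq (b, k, i) | i <- s k] | k <- r]).
Proof.
move=> ur us; elim: r ur => [|k r IH] //= /andP [kr ur].
rewrite cat_uniq IH // andbT map_inj_uniq ?us //; last by move=> i j [].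
apply/hasPn => x; rewrite mem_flat => /and3P [_ xr _].
rewrite mem_mapb; apply/negP => /and3P [_ /eqP xk _]; move: kr; by rewrite -xk xr.
Qed.

Lemma uniq_map_b (b k : nat) (s : seq nat) : uniq s -> uniq [seq ((b, k, i) : lab) | i <- s].
Proof. by move=> us; rewrite map_inj_uniq // => i j []. Qed.

Lemma blk_cat (s1 s2 : seq lab) b :
  uniq s1 -> uniq s2 -> (forall x, x \in s1 -> x.1.1 = b) ->
  (forall x, x \in s2 -> x.1.1 != b) -> uniq (s1 ++ s2).
Proof.
move=> u1 u2 h1 h2; rewrite cat_uniq u1 u2 andbT; apply/hasPn => x /h2 xb.
by apply/negP => /h1 xb'; move: xb; rewrite xb' eqxx.
Qed.

Lemma uniq_labs n d : uniq (labs n d).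
Proof.
rewrite /labs.
apply: (blk_cat (b := 0%N)); [exact: uniq_map_b (iota_uniq _ _) | |
  by move=> x; rewrite mem_mapb => /and3P [/eqP -> _ _] |
  by move=> [[b k] i]; rewrite !mem_cat !mem_flat !mem_mapb ?mem_iota inE ?xpair_eqE /=; lia].
apply: (blk_cat (b := 1%N)); [by apply: uniq_flat => *; apply: iota_uniq | |
  by move=> x; rewrite mem_flat => /and3P [/eqP -> _ _] |
  by move=> [[b k] i]; rewrite !mem_cat !mem_flat !mem_mapb ?mem_iota inE ?xpair_eqE /=; lia].
apply: (blk_cat (b := 2%N)); [by apply: uniq_flat => *; apply: iota_uniq | |
  by move=> x; rewrite mem_flat => /and3P [/eqP -> _ _] |
  by move=> [[b k] i]; rewrite !mem_cat !mem_mapb ?mem_iota inE ?xpair_eqE /=; lia].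
apply: (blk_cat (b := 3%N)); [exact: uniq_map_b (iota_uniq _ _) | |
  by move=> x; rewrite mem_mapb => /and3P [/eqP -> _ _] |
  by move=> [[b k] i]; rewrite !mem_cat !mem_mapb ?mem_iota inE ?xpair_eqE /=; lia].
apply: (blk_cat (b := 4%N)); [exact: uniq_map_b (iota_uniq _ _) | by [] |
  by move=> x; rewrite mem_mapb => /and3P [/eqP -> _ _] |
  by move=> [[b k] i]; rewrite inE ?xpair_eqE /=; lia].
Qed.

End Infra4.

Section Infra5.
Variable C : numClosedFieldType.
Local Notation ov := (@ov C).
Local Notation sem := (@sem C).

Lemma st2 a b (u v : seq (C * nat)) l :
  st [:: (a, u); (b, v)] l = if a == l then u else if b == l then v else [:: (1, 0%N)].
Proof. by rewrite /st /=; case: (a == l); case: (b == l). Qed.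
Lemma st3 a b c (u v w : seq (C * nat)) l :
  st [:: (a, u); (b, v); (c, w)] l =
  if a == l then u else if b == l then v else if c == l then w else [:: (1, 0%N)].
Proof. by rewrite /st /=; case: (a == l); case: (b == l); case: (c == l). Qed.

Lemma semA m d k i : sem m.+3 d (0, k, i)%N = st [:: (0%N, minus0 C i); (m.+2, basis1 C i)].
Proof. by []. Qed.
Lemma semB m d k i : sem m.+3 d (1, k, i)%N = st [:: (k, basis1 C i); (k.+1, minus0 C i)].
Proof. by []. Qed.
Lemma semC m d k i : sem m.+3 d (2, k, i)%N =
  st [:: (k, basis1 C 1); (k.+1, minus0 C i); (k.+2, basis1 C i)].
Proof. by []. Qed.
Lemma semD m d k i : sem m.+3 d (3, k, i)%N =
  st [:: (0%N, basis1 C (if odd i then 1%N else 2%N)); (m.+1, basis1 C 1);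
         (m.+2, [:: (1, i.-1); (-1, i)])].
Proof. by []. Qed.
Lemma semG m d k i : sem m.+3 d (4, k, i)%N =
  st [:: (0%N, minus0 C 2); (m.+1, minus0 C 2); (m.+2, basis1 C i)].
Proof. by []. Qed.
Lemma semT m d k i l : sem m.+3 d (5, k, i)%N l = U C (d l).
Proof. by []. Qed.

Lemma dmono n (d : nat -> nat) : (forall k, (k.+1 < n)%N -> (d k <= d k.+1)%N) ->
  forall a b, (a <= b)%N -> (b < n)%N -> (d a <= d b)%N.
Proof.
move=> H a b; elim: b => [|b IH] ab bn; first by have -> : a = 0%N by lia.
case: (eqVneq a b.+1) => [->//|ne].
have := H b bn; have := IH ltac:(lia) ltac:(lia); lia.
Qed.

End Infra5.

Ltac dec_if := match goal with
  | |- context [if ?a == ?b then _ else _] =>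
      first [ have -> : (a == b) = true by lia
            | have -> : (a == b) = false by lia
            | case: (@eqP _ a b) => ? ]
  | |- context [if ?c then _ else _] =>
      first [ have -> : c = true by lia | have -> : c = false by lia | case: c ]
  end.

Ltac fin_ov := first [ apply: ov_disj; rewrite /= ?andbT; lia
                     | apply: ov_mU; lia | apply: ov_dU; lia ].

Ltac Z l := exists l; split; [lia | rewrite ?semA ?semB ?semC ?semD ?semG ?semT ?st2 ?st3;
                                    repeat dec_if; fin_ov].

Section Orth.
Variable C : numClosedFieldType.
Local Notation ov := (@ov C).
Local Notation sem := (@sem C).

Definition lexlt (L1 L2 : lab) :=
  let: (b1, k1, i1) := L1 in let: (b2, k2, i2) := L2 in
  ((b1 < b2) || (b1 == b2) && ((k1 < k2) || (k1 == k2) && (i1 < i2)))%N.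

Lemma orth_key m d (L1 L2 : lab) :
  (forall k, (k.+1 < m.+3)%N -> (d k <= d k.+1)%N) -> (3 <= d 0%N)%N ->
  valid m.+3 d L1 -> valid m.+3 d L2 -> lexlt L1 L2 ->
  exists l, (l < m.+3)%N /\ ov (d l) (sem m.+3 d L1 l) (sem m.+3 d L2 l) = 0.
Proof.
move=> Hd H3; have DM := dmono Hd.
move: L1 L2 => [[b1 k1] i1] [[b2 k2] i2].
have h0k1 : (k1 < m.+3)%N -> (d 0%N <= d k1)%N by move=> h; apply: DM; lia.
have h0k2 : (k2 < m.+3)%N -> (d 0%N <= d k2)%N by move=> h; apply: DM; lia.
have hk1 : (k1.+1 < m.+3)%N -> (d k1 <= d k1.+1)%N by apply: Hd.
have hk2 : (k2.+1 < m.+3)%N -> (d k2 <= d k2.+1)%N by apply: Hd.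
have hm1 : (d 0%N <= d m.+1)%N by apply: DM; lia.
have hm2 : (d m.+1 <= d m.+2)%N by apply: Hd.
have hm0 : (d 0%N <= d m)%N by apply: DM; lia.
case: b1 => [|[|[|[|[|[|b1]]]]]]; case: b2 => [|[|[|[|[|[|b2]]]]]] //=; rewrite ?andbF //.
all: move=> V1 V2 LT.
all: try (exfalso; move: LT; lia).
- Z m.+2.
- case: (posnP k2) => hk.
  + Z m.+2.
  + Z k2.
- Z m.+2.
- Z m.+1.
- Z m.+2.
- Z 0%N.
- Z k1.
- case: (eqVneq k1 k2) => e1; first Z k2.+2.
  case: (eqVneq k1.+1 k2) => e2; first Z k1.
  Z k2.
- case: (posnP k1) => hk; first Z m.+2.
  Z 0%N.
- case: (eqVneq k1 m.+1) => e1; last Z m.+2.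
  case: (eqVneq i1 2) => e2; first Z m.+2.
  Z m.+1.
- Z k1.+1.
- case: (eqVneq k1 k2) => e1; first Z k1.+2.
  Z k1.
- case: (eqVneq k1 m) => e1; first Z m.+1.
  Z m.+2.
- Z k1.
- Z k1.+1.
- case: (eqVneq i2 i1.+1) => e1; last Z m.+2.
  exists 0%N; split; first by []. rewrite ?semD !st3 /= e1 oddS.
  apply: ov_disj; case: (odd i1) => //=.
- Z m.+1.
- Z m.+2.
- Z m.+2.
- Z 0%N.
Qed.

End Orth.

Section Glue.
Variable C : numClosedFieldType.
Local Notation ov := (@ov C).
Local Notation sem := (@sem C).

Lemma lexlt_total (L1 L2 : lab) : L1 != L2 -> lexlt L1 L2 || lexlt L2 L1.
Proof. by move: L1 L2 => [[b1 k1] i1] [[b2 k2] i2]; rewrite /= !xpair_eqE; lia. Qed.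

Lemma part2 m d :
  (forall k, (k.+1 < m.+3)%N -> (d k <= d k.+1)%N) -> (3 <= d 0%N)%N ->
  @states_pairwise_orthogonal C m.+3 d (theset C m.+3 d).
Proof.
move=> Hd H3 a b; rewrite theset_map size_map => ha hb ab.
rewrite !(nth_map (0, 0, 0)%N) //; apply: inner0.
set L1 := nth _ _ a; set L2 := nth _ _ b.
have V1 : valid m.+3 d L1 by rewrite -mem_labs mem_nth.
have V2 : valid m.+3 d L2 by rewrite -mem_labs mem_nth.
have ne : L1 != L2 by rewrite nth_uniq ?uniq_labs //; apply/eqP.
case/orP: (lexlt_total ne) => lt.
  exact: orth_key.
have [l [ln H]] := orth_key C Hd H3 V2 V1 lt.
by exists l; split => //; apply: ov_sym0.
Qed.

Lemma op_use n d t (E : 'M[C]_(d t)) (L1 L2 : lab) :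
  orth_preserving n (theset C n d) E ->
  valid n d L1 -> valid n d L2 -> L1 != L2 ->
  (forall l, (l < n)%N -> l != t -> ov (d l) (sem n d L1 l) (sem n d L2 l) != 0) ->
  eE E (sem n d L1 t) (sem n d L2 t) = 0.
Proof.
move=> OP V1 V2 ne NZ; apply: sand0 NZ.
rewrite -mem_labs in V1; rewrite -mem_labs in V2.
have := OP (index L1 (labs n d)) (index L2 (labs n d)).
rewrite theset_map size_map !index_mem !(nth_map (0, 0, 0)%N) ?index_mem // !nth_index //.
apply => //; move/(congr1 (nth (0, 0, 0)%N (labs n d))); rewrite !nth_index //.
by move/eqP; rewrite (negPf ne).
Qed.

End Glue.

Section Count.
Variable C : numClosedFieldType.

Lemma size_flat (b : nat) (s : nat -> seq nat) (r : seq nat) :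
  size (flatten [seq [seq ((b, k, i) : lab) | i <- s k] | k <- r]) = (\sum_(k <- r) size (s k))%N.
Proof. elim: r => [|k r IH] /=; first by rewrite big_nil. by rewrite big_cons size_cat size_map IH. Qed.

Lemma sumA (d : nat -> nat) N : (forall k, (k < N)%N -> (1 <= d k)%N) ->
  (\sum_(k <- iota 0 N) (d k).-1 + N = \sum_(k <- iota 0 N) d k)%N.
Proof.
elim: N => [|N IH] H; first by rewrite !big_nil.
rewrite -addn1 iotaD !big_cat /= add0n !big_seq1 ?addn1.
have := IH (fun k hk => H k ltac:(lia)); have := H N (ltnSn N); lia.
Qed.

Lemma sumB (d : nat -> nat) N : (forall k, (k < N)%N -> (d k <= d k.+1)%N) ->
  (\sum_(k <- iota 0 N) (d k.+1 - d k) + d 0%N = d N)%N.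
Proof.
elim: N => [|N IH] H; first by rewrite !big_nil.
rewrite -addn1 iotaD !big_cat /= add0n !big_seq1 ?addn1.
have := IH (fun k hk => H k ltac:(lia)); have := H N (ltnSn N); lia.
Qed.

Lemma size_labs n d : size (labs n d) =
  ((d 0%N).-1 + \sum_(k <- iota 0 n.-1) (d k).-1 + \sum_(k <- iota 0 n.-2) (d k.+1 - d k)
   + (d n.-1 - d n.-2) + (d n.-1 - d 0%N) + 1)%N.
Proof.
rewrite /labs !size_cat !size_map !size_flat !size_iota /=.
rewrite (eq_bigr (fun k => (d k).-1)); last by move=> k _; rewrite size_iota.
rewrite [X in (_ + (_ + (X + _)))%N](eq_bigr (fun k => d k.+1 - d k)%N); last by move=> k _; rewrite size_iota.
lia.
Qed.

Lemma sumE0 (d : nat -> nat) N : (0 < N)%N ->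
  (\sum_(k <- iota 0 N) d k = d 0%N + \sum_(1 <= i < N) d i)%N.
Proof. by case: N => // N _; rewrite /index_iota subSS subn0 big_cons. Qed.

Lemma part1 m d :
  (forall k, (k.+1 < m.+3)%N -> (d k <= d k.+1)%N) -> (3 <= d 0%N)%N ->
  (size (theset C m.+3 d) + m.+3 = \sum_(1 <= i < (m.+3).-1) d i + 2 * d (m.+3).-1 + 1)%N.
Proof.
move=> Hd H3; have DM := dmono Hd.
rewrite theset_map size_map size_labs.
have EA := @sumA d (m.+3).-1 (fun k hk => leq_trans (leq_trans (isT : 1 <= 3)%N H3) (DM 0%N k ltac:(lia) ltac:(lia))).
have EB := @sumB d (m.+3).-2 (fun k hk => Hd k ltac:(lia)).
have E0 := @sumE0 d (m.+3).-1 isT.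
have h1 := DM 0%N (m.+3).-2 ltac:(lia) ltac:(lia).
have h2 := DM (m.+3).-2 (m.+3).-1 ltac:(lia) ltac:(lia).
have h3 := DM 0%N (m.+3).-1 ltac:(lia) ltac:(lia).
have e1 : ((m.+3).-1 = m.+2)%N by [].
have e2 : ((m.+3).-2 = m.+1)%N by [].
lia.
Qed.

End Count.

Section P3a.
Variable C : numClosedFieldType.
Local Notation ov := (@ov C).
Local Notation sem := (@sem C).
Local Notation e := (@e C).

Lemma op_use' n d t (E : 'M[C]_(d t)) (L1 L2 : lab) u v :
  orth_preserving n (theset C n d) E ->
  valid n d L1 -> valid n d L2 -> L1 != L2 ->
  (forall l, (l < n)%N -> l != t -> ov (d l) (sem n d L1 l) (sem n d L2 l) != 0) ->
  sem n d L1 t = u -> sem n d L2 t = v ->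
  eE E u v = 0.
Proof. by move=> OP V1 V2 ne NZ <- <-; apply: op_use. Qed.

Lemma triv_from m (E : 'M[C]_m) : (0 < m)%N ->
  (forall i j, (i < m)%N -> (j < m)%N -> i != j -> e E i j = 0) ->
  (forall i, (0 < i < m)%N -> e E i i = e E 0 0) -> trivial_op E.
Proof.
move=> m0 Hoff Hdiag; exists (e E 0 0); apply/matrixP => i j.
rewrite mxE -eEntry.
case: (eqVneq i j) => [<-|ne].
  rewrite ?eqxx ?mulr1n; case: (posnP i) => [i0|ip].
    by rewrite i0.
  by apply: Hdiag; rewrite ip ltn_ord.
rewrite ?mulr0n; apply: Hoff => //; by rewrite val_eqE.
Qed.

End P3a.

Ltac dec_if' := match goal with
  | |- context [if ?a == ?b then _ else _] =>
      first [ have -> : (a == b) = true by lia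
            | have -> : (a == b) = false by lia
            | case: (@eqP _ a b) => ?; try subst ]
  | |- context [if ?c then _ else _] =>
      first [ have -> : c = true by lia | have -> : c = false by lia | case: c ]
  end.

Ltac fin_nz := first [ exfalso; lia
  | apply: ov_bb; lia | apply: ov_0m; lia | apply: ov_m0; lia | apply: ov_im; lia
  | apply: ov_mi; lia | apply: ov_mm; lia | apply: ov_bU; lia ].

Ltac evsem := rewrite ?semA ?semB ?semC ?semD ?semG ?semT ?st2 ?st3; repeat dec_if'.

Ltac NZ DM3 := let l := fresh "l" in let hl := fresh "hl" in let hlt := fresh "hlt" in
  let hl3 := fresh "hl3" in
  move=> l hl hlt; have hl3 := DM3 l hl; evsem; fin_nz.

Ltac use_op OP DM3 L1 L2 := apply: (@op_use' _ _ _ _ _ L1 L2 _ _ OP);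
  [ rewrite /=; lia | rewrite /=; lia | rewrite !xpair_eqE /=; lia | NZ DM3 | evsem; reflexivity | evsem; reflexivity ].

Section P3b.
Variable C : numClosedFieldType.
Local Notation ov := (@ov C).
Local Notation sem := (@sem C).
Local Notation e := (@e C).

Lemma party0 m d (E : 'M[C]_(d 0%N)) :
  (forall k, (k.+1 < m.+3)%N -> (d k <= d k.+1)%N) -> (3 <= d 0%N)%N ->
  orth_preserving m.+3 (theset C m.+3 d) E -> trivial_op E.
Proof.
move=> Hd H3 OP; have DM := dmono Hd.
have DM3 : forall l, (l < m.+3)%N -> (3 <= d l)%N by move=> l hl; have := DM 0%N l isT hl; lia.
have h01 := Hd 0%N isT.
have h02 : (d 0%N <= d m.+2)%N by apply: DM; lia.
have OD : forall i j, (i < d 0%N)%N -> (j < d 0%N)%N -> i != j -> e E i j = 0.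
  move=> i j hi hj ne.
  case: (posnP i) => [i0|ip].
    have : eE E (basis1 C 0) (basis1 C j) = 0 by use_op OP DM3 (1, 1, j)%N (1, 0, j)%N.
    by rewrite eE_bb i0.
  case: (posnP j) => [j0|jp].
    have : eE E (basis1 C i) (basis1 C 0) = 0 by use_op OP DM3 (1, 0, i)%N (1, 1, i)%N.
    by rewrite eE_bb j0.
  have : eE E (basis1 C i) (basis1 C j) = 0 by use_op OP DM3 (1, 0, i)%N (1, 0, j)%N.
  by rewrite eE_bb.
apply: triv_from => //; first lia.
move=> i hi.
have : eE E (minus0 C i) (U C (d 0%N)) = 0 by use_op OP DM3 (0, 0, i)%N (5, 0, 0)%N.
rewrite eE_mU // => /eqP; rewrite subr_eq0 => /eqP <- //.
Qed.
End P3b.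

Section P3c.
Variable C : numClosedFieldType.
Local Notation ov := (@ov C).
Local Notation sem := (@sem C).
Local Notation e := (@e C).

Lemma partmid m d t' (E : 'M[C]_(d t'.+1)) : (t' <= m)%N ->
  (forall k, (k.+1 < m.+3)%N -> (d k <= d k.+1)%N) -> (3 <= d 0%N)%N ->
  orth_preserving m.+3 (theset C m.+3 d) E -> trivial_op E.
Proof.
move=> ht Hd H3 OP; have DM := dmono Hd.
have DM3 : forall l, (l < m.+3)%N -> (3 <= d l)%N by move=> l hl; have := DM 0%N l isT hl; lia.
have h1 : (d t' <= d t'.+1)%N by apply: Hd; lia.
have h2 : (d t'.+1 <= d t'.+2)%N by apply: Hd; lia.
have h0 : (d 0%N <= d t')%N by apply: DM; lia.
have hm : (d m.+1 <= d m.+2)%N by apply: Hd; lia.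
have hm0 : (d 0%N <= d m.+1)%N by apply: DM; lia.
have OA : forall i j, (0 < i < d t'.+1)%N -> (0 < j < d t'.+1)%N -> i != j -> e E i j = 0.
  move=> i j hi hj ne.
  have : eE E (basis1 C i) (basis1 C j) = 0 by use_op OP DM3 (1, t'.+1, i)%N (1, t'.+1, j)%N.
  by rewrite eE_bb.
have OD : forall i j, (i < d t'.+1)%N -> (j < d t'.+1)%N -> i != j -> e E i j = 0.
  move=> i j hi hj ne.
  case: (posnP i) => [i0|ip]; last case: (posnP j) => [j0|jp]; last by apply: OA; lia.
  - rewrite i0; have [tm|tm] : (t' < m)%N \/ t' = m by lia.
    + have : eE E (basis1 C 0) (basis1 C j) = 0 by use_op OP DM3 (1, t'.+2, j)%N (1, t'.+1, j)%N.
      by rewrite eE_bb.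
      subst t'.
      case: (ltnP j (d 0%N)) => hj0.
        have : eE E (basis1 C 0) (basis1 C j) = 0 by use_op OP DM3 (0, 0, j)%N (1, m.+1, j)%N.
        by rewrite eE_bb.
      have : eE E (minus0 C 2) (basis1 C j) = 0 by use_op OP DM3 (4, 0, j)%N (1, m.+1, j)%N.
      rewrite eE_mb (OA 2%N j) ?subr0 //; lia.
  - rewrite j0; have [tm|tm] : (t' < m)%N \/ t' = m by lia.
    + have : eE E (basis1 C i) (basis1 C 0) = 0 by use_op OP DM3 (1, t'.+1, i)%N (1, t'.+2, i)%N.
      by rewrite eE_bb.
      subst t'.
      case: (ltnP i (d 0%N)) => hi0.
        have : eE E (basis1 C i) (basis1 C 0) = 0 by use_op OP DM3 (1, m.+1, i)%N (0, 0, i)%N.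
        by rewrite eE_bb.
      have : eE E (basis1 C i) (minus0 C 2) = 0 by use_op OP DM3 (1, m.+1, i)%N (4, 0, i)%N.
      rewrite eE_bm (OA i 2%N) ?subr0 //; lia.
apply: triv_from => //; first lia.
move=> i hi.
case: (ltnP i (d t')) => hit.
  have : eE E (minus0 C i) (U C (d t'.+1)) = 0 by use_op OP DM3 (1, t', i)%N (5, 0, 0)%N.
  rewrite eE_mU // => /eqP; rewrite subr_eq0 => /eqP <- //.
have : eE E (minus0 C i) (U C (d t'.+1)) = 0 by use_op OP DM3 (2, t', i)%N (5, 0, 0)%N.
rewrite eE_mU // => /eqP; rewrite subr_eq0 => /eqP <- //.
Qed.

End P3c.

Section P3d.
Variable C : numClosedFieldType.
Local Notation ov := (@ov C).
Local Notation sem := (@sem C).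
Local Notation e := (@e C).

Lemma partlast m d (E : 'M[C]_(d m.+2)) :
  (forall k, (k.+1 < m.+3)%N -> (d k <= d k.+1)%N) -> (3 <= d 0%N)%N ->
  orth_preserving m.+3 (theset C m.+3 d) E -> trivial_op E.
Proof.
move=> Hd H3 OP; have DM := dmono Hd.
have DM3 : forall l, (l < m.+3)%N -> (3 <= d l)%N by move=> l hl; have := DM 0%N l isT hl; lia.
have h01 : (d 0%N <= d 1%N)%N by apply: Hd; lia.
have hm : (d m.+1 <= d m.+2)%N by apply: Hd; lia.
have hm0 : (d 0%N <= d m.+1)%N by apply: DM; lia.
have OA : forall i j, (0 < i < d m.+2)%N -> (0 < j < d m.+2)%N -> i != j -> e E i j = 0.
  move=> i j hi hj ne.
  case: (ltnP i (d 0%N)) => hi0; case: (ltnP j (d 0%N)) => hj0.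
  - have : eE E (basis1 C i) (basis1 C j) = 0 by use_op OP DM3 (0, 0, i)%N (0, 0, j)%N.
    by rewrite eE_bb.
  - have : eE E (basis1 C i) (basis1 C j) = 0 by use_op OP DM3 (0, 0, i)%N (4, 0, j)%N.
    by rewrite eE_bb.
  - have : eE E (basis1 C i) (basis1 C j) = 0 by use_op OP DM3 (4, 0, i)%N (0, 0, j)%N.
    by rewrite eE_bb.
  - have : eE E (basis1 C i) (basis1 C j) = 0 by use_op OP DM3 (4, 0, i)%N (4, 0, j)%N.
    by rewrite eE_bb.
have OD : forall i j, (i < d m.+2)%N -> (j < d m.+2)%N -> i != j -> e E i j = 0.
  move=> i j hi hj ne.
  case: (posnP i) => [i0|ip]; last case: (posnP j) => [j0|jp]; last by apply: OA; lia.
  - rewrite i0; case: (ltnP j (d 0%N)) => hj0.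
      have : eE E (basis1 C 0) (basis1 C j) = 0 by use_op OP DM3 (1, 0, j)%N (0, 0, j)%N.
      by rewrite eE_bb.
    have : eE E (basis1 C 0) (basis1 C j) = 0 by use_op OP DM3 (1, 0, 2)%N (4, 0, j)%N.
    by rewrite eE_bb.
  - rewrite j0; case: (ltnP i (d 0%N)) => hi0.
      have : eE E (basis1 C i) (basis1 C 0) = 0 by use_op OP DM3 (0, 0, i)%N (1, 0, i)%N.
      by rewrite eE_bb.
    have : eE E (basis1 C i) (basis1 C 0) = 0 by use_op OP DM3 (4, 0, i)%N (1, 0, 2)%N.
    by rewrite eE_bb.
apply: triv_from => //; first lia.
elim=> [|i IH] hi; first lia.
case: (ltnP i.+1 (d m.+1)) => hit.
  have : eE E (minus0 C i.+1) (U C (d m.+2)) = 0 by use_op OP DM3 (1, m.+1, i.+1)%N (5, 0, 0)%N.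
  rewrite eE_mU // => /eqP; rewrite subr_eq0 => /eqP <- //.
have : eE E [:: (1, i.+1.-1); (-1, i.+1)] (U C (d m.+2)) = 0
  by use_op OP DM3 (3, 0, i.+1)%N (5, 0, 0)%N.
rewrite eE_dU // => /eqP; rewrite subr_eq0 => /eqP <- /=.
apply: IH; lia.
Qed.

End P3d.

Theorem theorem2 (C : numClosedFieldType) (n : nat) (d : nat -> nat) :
  (3 <= n)%N -> (3 <= d 0%N)%N ->
  (forall k : nat, (k.+1 < n)%N -> (d k <= d k.+1)%N) ->
  (size (theset C n d) + n = \sum_(1 <= i < n.-1) d i + 2 * d n.-1 + 1)%N
  /\ @states_pairwise_orthogonal C n d (theset C n d)
  /\ (forall (t : nat) (E : 'M[C]_(d t)), (t < n)%N ->
        psd E -> @orth_preserving C n d (theset C n d) t E -> trivial_op E).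
Proof.
case: n => [|[|[|m]]] // _ H3 Hd.
split; first exact: part1.
split; first exact: part2.
case=> [|t] E ht _ OP; first exact: party0 Hd H3 OP.
case: (leqP t m) => htm; first exact: partmid htm Hd H3 OP.
have tm : t = m.+1 by lia.
subst t; exact: partlast Hd H3 OP.
Qed.
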